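(* Let $n_1,n_2$ be coprime positive integers with $n_2<n_1$ and $n_1>1$. Let $r_0$ be a nonnegative rational number. Let $[a_0,a_1,\dots,a_L]$ be the continued fraction expansion of $n_2/n_1$ and $[b_0,b_1,\dots,b_M]$ the continued fraction expansion of $r_0$ (standard algorithm described in the context). If $$\left|r_0-\frac{n_2}{n_1}\right|<\frac{1}{4n_1(n_1-1)},$$ then one of the following holds: (1) $a_i=b_i$ for $i=0,1,\dots,L$; (2) $a_i=b_i$ for $i=0,1,\dots,L-1$, $a_L-1=b_L$, and $b_{L+1}=1$.
   Context: Continued fraction expansion of a nonnegative rational number $y$ (standard algorithm): set $c_0=\lfloor y\rfloor$ and $s_0=y-c_0$; for $i\ge1$, as long as $s_{i-1}\neq0$, set $c_i=\lfloor 1/s_{i-1}\rfloor$ and $s_i=1/s_{i-1}-c_i$. The process stops at the first index $M$ with $s_M=0$, and the expansion is $[c_0,c_1,\dots,c_M]$, meaning $y=c_0+\cfrac{1}{c_1+\cfrac{1}{\ddots+\cfrac{1}{c_M}}}$. *)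

(* Defs.v *)
From mathcomp Require Import all_boot all_order all_algebra.
Set Implicit Arguments. Unset Strict Implicit. Unset Printing Implicit Defensive.
Import Order.TTheory GRing.Theory Num.Theory.
Local Open Scope ring_scope.

(* Continued fraction expansion of a rational y by the standard algorithm:
   c_0 = floor y, s_0 = y - c_0; while s_{i-1} <> 0:
   c_i = floor (1/s_{i-1}), s_i = 1/s_{i-1} - c_i.
   [cf_fuel k y] performs at most k reciprocal steps; [cf y] uses the fuel
   [denq y], which is always sufficient since the denominator strictly
   decreases at each step (the algorithm therefore always stops before
   the fuel runs out, and [cf y] is exactly [c_0; ...; c_M]). *)
Fixpoint cf_fuel (k : nat) (y : rat) : seq int :=
  let c := Num.floor y in
  let s := y - c%:~R in
  match k with
  | O => [:: c]
  | S k' => if s == 0 then [:: c] else c :: cf_fuel k' s^-1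
  end.

Definition cf (y : rat) : seq int := cf_fuel `|denq y|%N y.

(* Main.v *)
Require Import Defs.
From mathcomp Require Import all_boot all_order all_algebra ring lra zify.
Import Order.TTheory GRing.Theory Num.Theory.
Local Open Scope ring_scope.

Lemma denqDz (c : int) (x : rat) : denq (c%:~R + x) = denq x.
Proof.
have E : c%:~R + x = (c * denq x + numq x)%:~R / (denq x)%:~R.
  rewrite rmorphD rmorphM /= mulrDl -mulrA divff ?intr_eq0 ?denq_neq0 // mulr1.
  by rewrite divq_num_den.
rewrite E coprimeq_den.
  by rewrite denq_eq0 gtr0_norm ?denq_gt0.
have := coprime_num_den x.
rewrite /coprime -[gcdn _ _]/(`|gcdz (numq x) (denq x)|%N).
rewrite -[gcdn `|_| `|denq x|]/(`|gcdz _ (denq x)|%N).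
by rewrite [gcdz (_ + _) _]gcdzC gcdzMDl gcdzC.
Qed.

Lemma denqV_lt (s : rat) : 0 < s < 1 -> (denq s^-1 < denq s) /\ denq s^-1 = numq s.
Proof.
case/andP=> s0 s1.
have n0 : 0 < numq s by rewrite numq_gt0.
have E : s^-1 = (denq s)%:~R / (numq s)%:~R.
  by rewrite -{1}[s]divq_num_den invf_div.
have D : denq s^-1 = numq s.
  rewrite E coprimeq_den ?gtr0_norm // ?(negbTE (lt0r_neq0 n0)) //.
  by rewrite coprime_sym coprime_num_den.
split=> //; rewrite D.
have : (numq s)%:~R < (denq s)%:~R :> rat.
  by rewrite numqE -[X in _ < X]mul1r ltr_pM2r // ltr0z denq_gt0.
by rewrite ltr_int.
Qed.

Lemma frac_facts (y : rat) : let s := y - (Num.floor y)%:~R in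
  0 <= s < 1 /\ denq s = denq y /\ (s != 0 -> (denq s^-1 < denq s) /\ 1 < denq s).
Proof.
move=> s.
have I : 0 <= s < 1.
  have := floor_itv y; rewrite /s subr_ge0 => /andP[-> h].
  by move: h; rewrite /= rmorphD /=; lra.
have D : denq s = denq y by rewrite /s addrC -intrN denqDz.
split=> //; split=> // sn0.
have [h _] : (denq s^-1 < denq s) /\ denq s^-1 = numq s.
  apply: denqV_lt; case/andP: I => a b; by rewrite lt0r sn0 a b.
split=> //; apply: le_lt_trans h; by rewrite -gtz0_ge1 denq_gt0.
Qed.

Lemma cf_fuel_eq k m y : denq y <= (k.+1)%:Z -> denq y <= (m.+1)%:Z ->
  cf_fuel k y = cf_fuel m y.
Proof.
elim: k m y => [|k IH] [|m] y /=; have [I [D F]] := frac_facts y;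
  set s := y - _ in I D F *.
- by [].
- move=> hk _; case: eqP => // /eqP /F [_ h]; exfalso.
  by move: hk; rewrite -D; apply/negP; rewrite -ltNge.
- move=> _ hm; case: eqP => // /eqP /F [_ h]; exfalso.
  by move: hm; rewrite -D; apply/negP; rewrite -ltNge.
- move=> hk hm; case: eqP => // /eqP /F [h _]; congr (_ :: _); apply: IH.
  + move: hk h; rewrite D; lia.
  + move: hm h; rewrite D; lia.
Qed.

Lemma cf_fuelE k y : denq y <= (k.+1)%:Z -> cf_fuel k y = cf y.
Proof.
move=> h; rewrite /cf; apply: cf_fuel_eq => //.
have := denq_gt0 y; lia.
Qed.

Lemma floor_eqI (c : int) (y : rat) : c%:~R <= y -> y < c%:~R + 1 -> Num.floor y = c.
Proof. by move=> h1 h2; apply: floor_def; rewrite h1 rmorphD /= h2. Qed.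

Lemma cf_fuel_head k y : exists t, cf_fuel k y = Num.floor y :: t.
Proof. by case: k => [|k] /=; [exists [::] | case: eqP => _; eexists]. Qed.

Lemma cf_head y : exists t, cf y = Num.floor y :: t.
Proof. exact: cf_fuel_head. Qed.

Lemma cf_int (c : int) : cf c%:~R = [:: c].
Proof.
have F : Num.floor (c%:~R : rat) = c by apply: floor_eqI; lra.
rewrite /cf denq_int /= F subrr eqxx //.
Qed.

Lemma cf_step (c : int) (u : rat) : 1 < u -> cf (c%:~R + u^-1) = c :: cf u.
Proof.
move=> u1.
have ui0 : 0 < u^-1 by rewrite invr_gt0; lra.
have ui1 : u^-1 < 1 by rewrite invf_lt1; lra.
have F : Num.floor (c%:~R + u^-1) = c by apply: floor_eqI; lra.
have S : c%:~R + u^-1 - c%:~R = u^-1 by rewrite addrC addKr.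
have [_ [D G]] := frac_facts (c%:~R + u^-1).
rewrite F S in D G.
have [h1 h2] := G (lt0r_neq0 ui0).
rewrite invrK in h1.
rewrite /cf denqDz.
case E: `|denq u^-1|%N => [|n].
  by move: E h2; lia.
rewrite /= F S (negbTE (lt0r_neq0 ui0)) invrK.
congr (_ :: _); apply: cf_fuelE; move: E h1; lia.
Qed.
Lemma boundA (Q P e d b : rat): 2 <= Q -> 1 <= P -> P + 1 <= Q ->
  e * (4*Q*(Q-1)) = 1 -> b * Q = P -> b - e < d < b + e -> 0 < d < 1.
Proof.
move=> Q2 P1 PQ He Hb /andP[h1 h2].
have e0 : 0 < e by nra.
have eQ : e * Q <= 1/4 by nra.
have bQ1 : (b + e) * Q <= Q by nra.
have bQ0 : 0 < (b - e) * Q by nra.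
apply/andP; split; nra.
Qed.

Lemma boundB (Q e d b u : rat): 2 <= Q ->
  e * (4*Q*(Q-1)) = 1 -> b * Q = 1 -> b - e < d < b + e -> u * d = 1 -> 0 < d ->
  Q - 1/2 < u < Q + 1.
Proof.
move=> Q2 He Hb /andP[h1 h2] ud d0.
have e0 : 0 < e by nra.
have f1 : (Q+1) * Q * e < 1 by nra.
have k1' : Q < (Q+1) * (b - e) * Q by nra.
have k1 : 1 < (Q+1) * (b - e) by nra.
have f2 : (Q - 1/2) * Q * e < 1/2 by nra.
have k2' : (Q - 1/2) * (b + e) * Q < Q by nra.
have k2 : (Q - 1/2) * (b + e) < 1 by nra.
have u0 : 0 < u by nra.
apply/andP; split; nra.
Qed.

Lemma boundC (Q P e d b u x : rat): 2 <= P -> P + 1 <= Q ->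
  e * (4*Q*(Q-1)) = 1 -> b * Q = P -> `|d - b| < e -> u * d = 1 -> x * P = Q -> 0 < d ->
  `|u - x| < 1 / (4 * P * (P - 1)).
Proof.
move=> P2 PQ He Hb h ud xP d0.
have Q3 : 3 <= Q by lra.
have K0 : 0 < 4 * P * (P - 1) by nra.
set K := 4 * P * (P - 1) in K0 *.
have e0 : 0 < e.
  have q0 : 0 < 4 * Q * (Q - 1) by apply: mulr_gt0; [apply: mulr_gt0|]; lra.
  move: He q0; set W := 4 * Q * (Q - 1); nra.
have b0 : 0 < b by nra.
have x0 : 0 < x by nra.
have u0 : 0 < u by nra.
have bx : b * x = 1.
  have : (b * x - 1) * P = 0 by rewrite mulrBl -mulrA xP Hb mul1r subrr.
  by move/eqP; rewrite mulf_eq0 subr_eq0 => /orP[/eqP//|/eqP]; lra.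
have E : u - x = (b - d) * u * x.
  have -> : (b - d) * u * x = (b * x) * u - (u * d) * x by ring.
  by rewrite bx ud; ring.
have eQ : e * Q * (4 * (Q - 1)) = e * (4*Q*(Q-1)) by ring.
rewrite He in eQ.
have m1 : Q * K + P <= 4 * (Q - 1) * P * P by rewrite /K; nra.
have m2 : e * Q * (Q * K + P) <= P * P.
  have : e * Q * (Q * K + P) * (4 * (Q - 1)) <= P * P * (4 * (Q - 1)).
    have -> : e * Q * (Q * K + P) * (4 * (Q - 1)) = (e * Q * (4 * (Q - 1))) * (Q * K + P) by ring.
    rewrite eQ; nra.
  rewrite ler_pM2r //; lra.
have m3 : e * (x * K + 1) <= b.
  have : e * (x * K + 1) * (P * Q) <= b * (P * Q).
    have -> : e * (x * K + 1) * (P * Q) = e * Q * ((x * P) * K + P) by ring.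
    have -> : b * (P * Q) = P * (b * Q) by ring.
    by rewrite xP Hb.
  rewrite ler_pM2r //; nra.
set t := `|d - b| in h *.
have t0 : 0 <= t by rewrite /t normr_ge0.
have db : b - t <= d by have := ler_norm (b - d); rewrite distrC -/t; lra.
have key : t * x * K < d.
  have : t * (x * K + 1) < e * (x * K + 1) by rewrite ltr_pM2r //; nra.
  nra.
rewrite E normrM normrM (gtr0_norm u0) (gtr0_norm x0) distrC -/t.
rewrite ltr_pdivlMr //.
have -> : t * u * x * K = (t * x * K) * u by ring.
nra.
Qed.

Definition Pr (a b : seq int) : Prop :=
  let L := (size a).-1 in
  ((L < size b)%N /\ (forall i, (i <= L)%N -> nth 0 a i = nth 0 b i))
  \/
  [/\ (L.+1 < size b)%N,
      (forall i, (i < L)%N -> nth 0 a i = nth 0 b i),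
      nth 0 a L - 1 = nth 0 b L
    & nth 0 b L.+1 = 1].

Lemma Pr_cons c a b : a != [::] -> Pr a b -> Pr (c :: a) (c :: b).
Proof.
case: a => // a0 a _; rewrite /Pr /= => [[[h1 h2]|[h1 h2 h3 h4]]].
- left; split => // -[|i] //= hi; exact: h2.
- right; split => // -[|i] //= hi; exact: h2.
Qed.

Lemma main q : forall p, (1 < q)%N -> coprime q p -> forall r : rat,
  `|r - p%:R / q%:R| < 1 / (4 * q%:R * (q%:R - 1)) -> Pr (cf (p%:R / q%:R)) (cf r).
Proof.
elim/ltn_ind: q => q IH p q1 cop r hr.
set p' := (p %% q)%N; set a0 := (p %/ q)%N.
have cop' : coprime q p' by rewrite /p' coprime_modr.
have p'1 : (0 < p')%N.
  move: cop'; case: (posnP p') => // ->; rewrite /coprime gcdn0 => /eqP q1'.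
  by rewrite q1' in q1.
have p'q : (p' < q)%N by rewrite /p' ltn_pmod // ltnW.
set Q : rat := q%:R; set P' : rat := p'%:R.
have Q2 : 2 <= Q by rewrite /Q ler_nat.
have P1 : 1 <= P' by rewrite /P' ler1n.
have PQ : P' + 1 <= Q by rewrite /P' /Q -(@natrD _ p' 1) ler_nat addn1.
have Q0 : Q != 0 by apply/eqP; lra.
have P0 : P' != 0 by apply/eqP; lra.
have xE : p%:R / Q = (a0%:Z)%:~R + (Q / P')^-1.
  rewrite invf_div /= /P' /Q {1}(divn_eq p q) natrD natrM -/Q.
  by field.
set e := 1 / (4 * Q * (Q - 1)) in hr.
have He : e * (4 * Q * (Q - 1)) = 1.
  rewrite /e mul1r mulVf //; apply/eqP.
  have : 0 < 4 * Q * (Q - 1) by apply: mulr_gt0; [apply: mulr_gt0|]; lra.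
  lra.
set b := P' / Q.
have Hb : b * Q = P' by rewrite /b mulfVK.
set d := r - (a0%:Z)%:~R.
have hd : `|d - b| < e.
  by move: hr; rewrite xE /d /b invf_div /= opprD addrA.
have hd' : b - e < d < b + e by rewrite -ltr_distl.
have /andP[d0 d1] := @boundA Q P' e d b Q2 P1 PQ He Hb hd'.
set u := d^-1.
have u1 : 1 < u by rewrite /u invf_gt1.
have rE : r = (a0%:Z)%:~R + u^-1 by rewrite /u invrK /d addrC subrK.
have x1 : 1 < Q / P'.
  by rewrite ltr_pdivlMr ?mul1r; lra.
rewrite xE rE !cf_step //.
apply: Pr_cons.
  by have [t ->] := cf_head (Q / P').
have [pe1|pg1] := eqVneq p' 1%N.
  have QE : Q / P' = (q%:Z)%:~R by rewrite /P' pe1 divr1.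
  rewrite QE cf_int.
  have Hb1 : b * Q = 1 by rewrite Hb /P' pe1.
  have /andP[ul uh] := @boundB Q e d b u Q2 He Hb1 hd' (mulVf (lt0r_neq0 d0)) d0.
  have [uQ|uQ] := lerP Q u.
    have F : Num.floor u = q by apply: floor_eqI.
    have [t ->] := cf_head u; rewrite F.
    by left; split => // -[|i].
  set s := u - ((q%:Z - 1)%:~R).
  have sE : (q%:Z - 1)%:~R = Q - 1 by rewrite rmorphB.
  have s0 : 0 < s by rewrite /s sE; lra.
  have uE : u = (q%:Z - 1)%:~R + (s^-1)^-1 by rewrite invrK /s addrC subrK.
  have v1 : 1 < s^-1 by rewrite invf_gt1 // /s sE; lra.
  rewrite uE cf_step //.
  have F : Num.floor (s^-1) = 1.
    have sh : 1/2 < s by rewrite /s sE; lra.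
    have v2 : s^-1 < 2.
      by rewrite invf_plt ?posrE //; lra.
    apply: (@floor_eqI 1 (s^-1)); rewrite ?rmorph1 /=; lra.
  have [t ->] := cf_head (s^-1); rewrite F.
  by right; split => // -[|i].
have p'2 : (1 < p')%N by rewrite ltn_neqAle eq_sym pg1 p'1.
have hu : `|u - q%:R / p'%:R| < 1 / (4 * p'%:R * (p'%:R - 1)).
  apply: (@boundC Q P' e d b u _ _ PQ He Hb hd (mulVf (lt0r_neq0 d0)) _ d0).
    by rewrite /P' ler_nat.
  by rewrite mulfVK.
apply: (IH p' p'q q p'2 _ u hu); by rewrite coprime_sym.
Qed.

Theorem theorem5 (n1 n2 : nat) (r0 : rat) :
  coprime n1 n2 -> (0 < n2)%N -> (n2 < n1)%N -> (1 < n1)%N ->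
  0 <= r0 ->
  `|r0 - n2%:R / n1%:R| < 1 / (4 * n1%:R * (n1%:R - 1)) ->
  let a := cf (n2%:R / n1%:R) in
  let b := cf r0 in
  let L := (size a).-1 in
  ((L < size b)%N /\ (forall i, (i <= L)%N -> nth 0 a i = nth 0 b i))
  \/
  [/\ (L.+1 < size b)%N,
      (forall i, (i < L)%N -> nth 0 a i = nth 0 b i),
      nth 0 a L - 1 = nth 0 b L
    & nth 0 b L.+1 = 1].
Proof.
move=> cop _ _ q1 _ hr.
have H := @main n1 n2 q1 cop r0 hr. exact H.
Qed.
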